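(* Let $G$ be a $K_{2,3}$-saturated graph with vertex set $V$ and let $\alpha \in V$. Define $V_1 = N[\alpha] \cup \{v \in V : |N(v)\cap N(\alpha)| = 2\}$, $\mathcal U_2 = \{v \in V\setminus V_1 : |N(v)\cap N(\alpha)| = 1\}$, and $\mathcal U_3 = V \setminus (V_1\cup \mathcal U_2)$. For $b \in \mathcal U_2$ let $\omega(b) = |N(b)\cap V_1| + \tfrac12 |N(b)\cap \mathcal U_2|$. Let $x^* \in N(\alpha)$ satisfy $|N(x^* )\cap N(\alpha)| \leq 1$. Then: (i) if $y \in \mathcal U_2$ and $x^*$ is the unique common neighbor of $\alpha$ and $y$, then $\omega(y) \geq 1.5$, and if $\omega(y) = 1.5$ then there exist $x \in N(\alpha)\cap N(x^* )$ and $y' \in N(x)$ such that $N(y)\cap \mathcal U_2 = \{y'\}$; (ii) if $z \in \mathcal U_3$, then $$|N(z)\cap (V\setminus \mathcal U_3)| \geq 1 + \big|\{x \in N(\alpha) : N(z)\cap N(x)\cap \mathcal U_2 \neq \emptyset\}\big|.$$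
   Context: All graphs are finite and simple; $N(x)$ is the set of neighbors of $x$ and $N[x] = N(x)\cup\{x\}$. A graph $G$ is $K_{2,3}$-saturated if $G$ contains no subgraph isomorphic to $K_{2,3}$, but for every pair of nonadjacent vertices $u,v$, the graph $G+uv$ contains a subgraph isomorphic to $K_{2,3}$. *)

(* Defs.v *)
(* A simple graph is a symmetric irreflexive relation e on a finType T. *)
From mathcomp Require Import all_boot all_order all_algebra.
Set Implicit Arguments. Unset Strict Implicit. Unset Printing Implicit Defensive.
Import GRing.Theory Num.Theory.

Definition nbhd (T : finType) (e : rel T) (x : T) : {set T} := [set y | e x y].
Definition cnbhd (T : finType) (e : rel T) (x : T) : {set T} := x |: nbhd e x.

Definition has_K23 (T : finType) (e : rel T) : Prop :=
  exists a1 a2 b1 b2 b3 : T,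
    uniq [:: a1; a2; b1; b2; b3] /\
    [&& e a1 b1, e a1 b2, e a1 b3, e a2 b1, e a2 b2 & e a2 b3].

Definition add_edge (T : finType) (e : rel T) (u v : T) : rel T :=
  fun x y => [|| e x y, (x == u) && (y == v) | (x == v) && (y == u)].

Definition K23_saturated (T : finType) (e : rel T) : Prop :=
  ~ has_K23 e /\
  forall u v : T, u != v -> ~~ e u v -> has_K23 (add_edge e u v).

Definition V1 (T : finType) (e : rel T) (alpha : T) : {set T} :=
  cnbhd e alpha :|: [set v | #|nbhd e v :&: nbhd e alpha| == 2].

Definition U2 (T : finType) (e : rel T) (alpha : T) : {set T} :=
  [set v | (v \notin V1 e alpha) && (#|nbhd e v :&: nbhd e alpha| == 1)].

Definition U3 (T : finType) (e : rel T) (alpha : T) : {set T} :=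
  ~: (V1 e alpha :|: U2 e alpha).

Definition omega (T : finType) (e : rel T) (alpha b : T) : rat :=
  (#|nbhd e b :&: V1 e alpha|%:R + #|nbhd e b :&: U2 e alpha|%:R / 2)%R.

(* Main.v *)
Require Import Defs.
From mathcomp Require Import all_boot all_order all_algebra.
Set Implicit Arguments. Unset Strict Implicit. Unset Printing Implicit Defensive.
Import GRing.Theory Num.Theory.

Section S.
Variables (T : finType) (e : rel T).
Hypotheses (e_sym : symmetric e) (e_irr : irreflexive e).

Lemma old1 u v x y : add_edge e u v x y -> x != u -> x != v -> e x y.
Proof. by rewrite /add_edge => /or3P [//|/andP[/eqP-> _]|/andP[/eqP-> _]]; rewrite ?eqxx. Qed.
Lemma old2 u v x y : add_edge e u v x y -> y != u -> y != v -> e x y.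
Proof. by rewrite /add_edge => /or3P [//|/andP[_ /eqP->]|/andP[_ /eqP->]]; rewrite ?eqxx. Qed.
Lemma add_edgeC u v x y : add_edge e u v x y = add_edge e v u x y.
Proof. by rewrite /add_edge orbCA orbC orbA. Qed.

Definition P u v := exists w a b, [/\ e v w, w != u, a != b & [/\ e u a, e w a, e u b & e w b]].

Lemma core u v a1 a2 b1 b2 b3 : a1 = u -> b1 = v -> a1 != a2 -> a2 != b1 -> b2 != b3 ->
  b1 != b2 -> a1 != b2 -> b1 != b3 -> a1 != b3 ->
  add_edge e u v a1 b2 -> add_edge e u v a1 b3 -> add_edge e u v a2 b1 ->
  add_edge e u v a2 b2 -> add_edge e u v a2 b3 -> P u v.
Proof.
move=> <- <- d1 d2 d3 d4 d5 d6 d7 E12 E13 E21 E22 E23.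
have d1' : a2 != a1 by rewrite eq_sym.
exists a2, b2, b3; split => //.
- by rewrite e_sym; apply: (old1 E21) => //.
split.
- by apply: (old2 E12); rewrite // eq_sym.
- by apply: (old1 E22).
- by apply: (old2 E13); rewrite // eq_sym.
- by apply: (old1 E23).
Qed.

Lemma core' u v a1 a2 b1 b2 b3 : a1 = v -> b1 = u -> a1 != a2 -> a2 != b1 -> b2 != b3 ->
  b1 != b2 -> a1 != b2 -> b1 != b3 -> a1 != b3 ->
  add_edge e u v a1 b2 -> add_edge e u v a1 b3 -> add_edge e u v a2 b1 ->
  add_edge e u v a2 b2 -> add_edge e u v a2 b3 -> P v u.
Proof. rewrite !(add_edgeC u v); exact: core. Qed.

Lemma sat u v : ~ has_K23 e -> has_K23 (add_edge e u v) -> P u v \/ P v u.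
Proof.
move=> NK [a1 [a2 [b1 [b2 [b3 [Hu /and5P [E11 E12 E13 E21 /andP[E22 E23]]]]]]]].
move: Hu; rewrite /= !inE !negb_or.
case/andP => /and4P [d12 d13 d14 d15] /andP [/and3P [d23 d24 d25] /andP [/andP [d34 d35] /andP [d45 _]]].
have s := eq_sym.
case/or3P: (E11) => [o11|/andP[/eqP h1 /eqP h2]|/andP[/eqP h1 /eqP h2]];
  [|by left; apply: (core (a2:=a2) (b2:=b2) (b3:=b3) h1 h2); (done || by rewrite s) | by right; apply: (core' (a2:=a2) (b2:=b2) (b3:=b3) h1 h2); (done || by rewrite s)].
case/or3P: (E12) => [o12|/andP[/eqP h1 /eqP h2]|/andP[/eqP h1 /eqP h2]];
  [|by left; apply: (core (a2:=a2) (b2:=b1) (b3:=b3) h1 h2); (done || by rewrite s) | by right; apply: (core' (a2:=a2) (b2:=b1) (b3:=b3) h1 h2); (done || by rewrite s)].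
case/or3P: (E13) => [o13|/andP[/eqP h1 /eqP h2]|/andP[/eqP h1 /eqP h2]];
  [|by left; apply: (core (a2:=a2) (b2:=b1) (b3:=b2) h1 h2); (done || by rewrite s) | by right; apply: (core' (a2:=a2) (b2:=b1) (b3:=b2) h1 h2); (done || by rewrite s)].
case/or3P: (E21) => [o21|/andP[/eqP h1 /eqP h2]|/andP[/eqP h1 /eqP h2]];
  [|by left; apply: (core (a2:=a1) (b2:=b2) (b3:=b3) h1 h2); (done || by rewrite s) | by right; apply: (core' (a2:=a1) (b2:=b2) (b3:=b3) h1 h2); (done || by rewrite s)].
case/or3P: (E22) => [o22|/andP[/eqP h1 /eqP h2]|/andP[/eqP h1 /eqP h2]];
  [|by left; apply: (core (a2:=a1) (b2:=b1) (b3:=b3) h1 h2); (done || by rewrite s) | by right; apply: (core' (a2:=a1) (b2:=b1) (b3:=b3) h1 h2); (done || by rewrite s)].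
case/or3P: (E23) => [o23|/andP[/eqP h1 /eqP h2]|/andP[/eqP h1 /eqP h2]];
  [|by left; apply: (core (a2:=a1) (b2:=b1) (b3:=b2) h1 h2); (done || by rewrite s) | by right; apply: (core' (a2:=a1) (b2:=b1) (b3:=b2) h1 h2); (done || by rewrite s)].
exfalso; apply: NK; exists a1, a2, b1, b2, b3; split.
  by rewrite /= !inE !negb_or d12 d13 d14 d15 d23 d24 d25 d34 d35 d45.
by rewrite o11 o12 o13 o21 o22 o23.
Qed.

Lemma neq_e x y : e x y -> x != y.
Proof. by apply: contraTneq => ->; rewrite e_irr. Qed.

Lemma common2 (NK : ~ has_K23 e) x y : x != y -> #|nbhd e x :&: nbhd e y| <= 2.
Proof.
move=> dxy; rewrite leqNgt; apply/negP => /card_gt2P [b1 [b2 [b3 [[h1 h2 h3] [d12 d23 d31]]]]].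
move: h1 h2 h3; rewrite !inE => /andP[x1 y1] /andP[x2 y2] /andP[x3 y3].
apply: NK; exists x, y, b1, b2, b3; split; last by rewrite x1 x2 x3 y1 y2 y3.
rewrite /= !inE !negb_or dxy (neq_e x1) (neq_e x2) (neq_e x3) (neq_e y1) (neq_e y2) (neq_e y3) d12 d23 (eq_sym b1) d31.
done.
Qed.

Lemma arith1 a b : 1 < a -> 3 <= a.*2 + b.
Proof. by case: a => [|[|a]] // _; rewrite !doubleS. Qed.
Lemma arith2 a b : 0 < a -> 0 < b -> 3 <= a.*2 + b.
Proof. by case: a => [|[|a]] //; case: b => [|b] // _ _; rewrite ?doubleS ?addnS. Qed.
Lemma arith3 a b : 0 < a -> a.*2 + b = 3 -> a = 1 /\ b = 1.
Proof. by case: a => [|[|a]] //; case: b => [|[|b]] // _; rewrite ?doubleS ?addnS. Qed.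

Lemma omega_eq (a b : nat) : (a%:R + b%:R / 2%:R = (a.*2 + b)%:R / 2%:R :> rat)%R.
Proof. by rewrite natrD -muln2 natrM mulrDl mulfK. Qed.

Lemma omega_le (n : nat) : (3%:R / 2%:R <= n%:R / 2%:R :> rat)%R = (3 <= n).
Proof. by rewrite ler_pM2r ?invr_gt0 // ler_nat. Qed.

Lemma omega_eq3 (n : nat) : (n%:R / 2%:R = 3%:R / 2%:R :> rat)%R -> n = 3.
Proof. by move/(mulIf _)=> /(_ isT) /eqP; rewrite eqr_nat => /eqP. Qed.
End S.

Section S2.
Variables (T : finType) (e : rel T).
Hypotheses (e_sym : symmetric e) (e_irr : irreflexive e) (NK : ~ has_K23 e).
Variable alpha : T.

Lemma inV1 v : (v \in V1 e alpha) = [|| v == alpha, e alpha v | #|nbhd e v :&: nbhd e alpha| == 2].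
Proof. by rewrite /V1 /cnbhd !inE orbA. Qed.

Lemma inU2 v : (v \in U2 e alpha) = (v \notin V1 e alpha) && (#|nbhd e v :&: nbhd e alpha| == 1).
Proof. by rewrite /U2 inE. Qed.

Lemma cls c w : c != alpha -> e alpha w -> e c w -> c \in V1 e alpha :|: U2 e alpha.
Proof.
move=> ca aw cw; rewrite inE; case: (boolP (c \in V1 e alpha)) => //= nV.
rewrite inU2 nV /=.
have le2 := common2 e_irr NK ca.
have ge1 : 0 < #|nbhd e c :&: nbhd e alpha| by apply/card_gt0P; exists w; rewrite !inE cw.
move: nV; rewrite inV1 => /norP [_ /norP [_ n2]].
rewrite eqn_leq ge1 andbT; move: le2 n2; rewrite leq_eqVlt => /orP [->//|].
by rewrite ltnS.
Qed.

Lemma twoA w a b : w != alpha -> a != b -> e alpha a -> e w a -> e alpha b -> e w b ->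
  w \in V1 e alpha.
Proof.
move=> wa ab aa wa' ab' wb; rewrite inV1; apply/or3P; apply: Or33.
rewrite eqn_leq (common2 e_irr NK) //=; apply/card_gt1P; exists a, b; by rewrite !inE wa' aa wb ab'.
Qed.

Lemma U2uniq u x x' : u \in U2 e alpha -> e alpha x -> e u x -> e alpha x' -> e u x' -> x = x'.
Proof.
rewrite inU2 => /andP [_ /cards1P [t Ht]] ax ux ax' ux'.
have : x \in [set t] by rewrite -Ht !inE ux ax.
have : x' \in [set t] by rewrite -Ht !inE ux' ax'.
by rewrite !inE => /eqP -> /eqP ->.
Qed.

End S2.

Theorem corollary3p3 (T : finType) (e : rel T)
  (e_sym : symmetric e) (e_irr : irreflexive e) (Hsat : K23_saturated e)
  (alpha xs : T) (Hxs : xs \in nbhd e alpha)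
  (Hxs1 : #|nbhd e xs :&: nbhd e alpha| <= 1) :
  (forall y : T, y \in U2 e alpha ->
     nbhd e y :&: nbhd e alpha = [set xs] ->
     (3%:R / 2%:R <= omega e alpha y)%R /\
     (omega e alpha y = (3%:R / 2%:R)%R ->
        exists x : T, exists y' : T,
          [/\ x \in nbhd e alpha :&: nbhd e xs, y' \in nbhd e x &
              nbhd e y :&: U2 e alpha = [set y']])) /\
  (forall z : T, z \in U3 e alpha ->
     1 + #|[set x in nbhd e alpha |
              nbhd e z :&: nbhd e x :&: U2 e alpha != set0]|
       <= #|nbhd e z :&: ~: U3 e alpha|).
Proof.
have NK := Hsat.1.
have SAT : forall u v, u != v -> ~~ e u v -> P e u v \/ P e v u.
  by move=> u v uv nuv; apply: sat => //; apply: Hsat.2.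
have axs : e alpha xs by rewrite inE in Hxs.
split.
- move=> y Hy H.
  have nVy : y \notin V1 e alpha by move: Hy; rewrite inU2 => /andP[].
  have [ya nay] : y != alpha /\ ~~ e alpha y by move: nVy; rewrite inV1 => /norP [? /norP [? _]].
  have yxs : e y xs by move: (set11 xs); rewrite -H in_setI inE => /andP [].
  have xsV : xs \in V1 e alpha by rewrite inV1 axs orbT.
  set a := #|nbhd e y :&: V1 e alpha|. set b := #|nbhd e y :&: U2 e alpha|.
  have a1 : 0 < a by apply/card_gt0P; exists xs; rewrite in_setI xsV andbT inE.
  have nya : ~~ e y alpha by rewrite e_sym.
  have CASE : (exists w, [/\ e y w, w != xs & w \in V1 e alpha]) \/
     (exists w c1 c2, [/\ e alpha w, c1 != c2,
        [/\ e y c1, e w c1 & c1 \in V1 e alpha :|: U2 e alpha] &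
        [/\ e y c2, e w c2 & c2 \in V1 e alpha :|: U2 e alpha]]).
    case: (SAT y alpha ya nya) => [[w [c1 [c2 [aw _ c12 [yc1 wc1 yc2 wc2]]]]] | [w [c1 [c2 [yw wa c12 [ac1 wc1 ac2 wc2]]]]]].
    + right; exists w, c1, c2; split => //.
      * split => //; apply: (cls e_irr NK (w:=w)) => //;
          [by apply: contraTneq yc1 => ->| by rewrite e_sym].
      * split => //; apply: (cls e_irr NK (w:=w)) => //;
          [by apply: contraTneq yc2 => ->| by rewrite e_sym].
    + left; exists w; split => //; last exact: (twoA e_irr NK wa c12 ac1 wc1 ac2 wc2).
      apply: contraTneq Hxs1 => wxs; rewrite -ltnNge; apply/card_gt1P; exists c1, c2.
      by rewrite !in_setI !inE -wxs wc1 wc2 ac1 ac2 c12.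
  have MAIN : exists c, [/\ e y c, c != xs & c \in V1 e alpha :|: U2 e alpha].
    case: CASE => [[w [yw wxs wV]]|[w [c1 [c2 [aw c12 [yc1 wc1 c1V] [yc2 wc2 c2V]]]]]].
    + by exists w; split => //; rewrite inE wV.
    + case: (eqVneq c1 xs) => [e1|n1]; last by exists c1.
      by exists c2; split => //; rewrite -e1 eq_sym.
  have ge3 : 3 <= a.*2 + b.
    case: MAIN => c [yc cxs]; rewrite inE => /orP [cV|cU].
    + apply: arith1; apply/card_gt1P; exists xs, c.
      by rewrite !in_setI xsV cV !inE yxs yc eq_sym.
    + apply: arith2 => //; apply/card_gt0P; exists c.
      by rewrite in_setI cU andbT inE.
  have Homega : omega e alpha y = ((a.*2 + b)%:R / 2%:R)%R by rewrite /omega omega_eq.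
  split; first by rewrite Homega omega_le.
  rewrite Homega => /omega_eq3 /(arith3 a1) [Ea Eb].
  have [y' Hy'] : exists y', nbhd e y :&: U2 e alpha = [set y'] by apply/cards1P; rewrite -/b Eb.
  have HV : nbhd e y :&: V1 e alpha = [set xs].
    move/eqP: Ea => /cards1P [t Ht].
    have : xs \in [set t] by rewrite -Ht in_setI xsV andbT inE.
    by rewrite Ht inE => /eqP ->.
  have Hc : forall c, e y c -> c \in V1 e alpha :|: U2 e alpha -> (c == xs) || (c == y').
    move=> c yc; rewrite inE => /orP [cV|cU].
      have : c \in nbhd e y :&: V1 e alpha by rewrite in_setI cV andbT inE.
      by rewrite HV inE => ->.
    have : c \in nbhd e y :&: U2 e alpha by rewrite in_setI cU andbT inE.
    by rewrite Hy' inE => ->; rewrite orbT.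
  case: CASE => [[w [yw wxs wV]]|[w [c1 [c2 [aw c12 [yc1 wc1 c1V] [yc2 wc2 c2V]]]]]].
  + have : w \in nbhd e y :&: V1 e alpha by rewrite in_setI wV andbT inE.
    by rewrite HV inE (negbTE wxs).
  + have h1 := Hc _ yc1 c1V; have h2 := Hc _ yc2 c2V.
    case/orP: h1 => /eqP E1; case/orP: h2 => /eqP E2.
    * by rewrite E1 E2 eqxx in c12.
    * exists w, y'; rewrite -E1 in_setI !inE aw e_sym wc1 -E2 wc2; split => //.
      by rewrite E2.
    * exists w, y'; rewrite -E2 in_setI !inE aw e_sym wc2 -E1 wc1; split => //.
      by rewrite E1.
    * by rewrite E1 E2 eqxx in c12.
- move=> z Hz.
  have nVz : z \notin V1 e alpha by move: Hz; rewrite in_setC in_setU negb_or => /andP [].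
  have [za nza] : z != alpha /\ ~~ e alpha z by move: nVz; rewrite inV1 => /norP [? /norP [? _]].
  have nza' : ~~ e z alpha by rewrite e_sym.
  pose f u := odflt u [pick x in nbhd e u :&: nbhd e alpha].
  have fP : forall u, u \in U2 e alpha -> e alpha (f u) && e u (f u).
    move=> u; rewrite inU2 => /andP [_ /cards1P [t Ht]]; rewrite /f; case: pickP => [x|] /=.
      by rewrite !inE => /andP [ux ax]; rewrite ux ax.
    by move/(_ t); rewrite Ht inE eqxx.
  set S := nbhd e z :&: U2 e alpha.
  set X := [set x in _ | _].
  have XS : X \subset f @: S.
    apply/subsetP => x; rewrite inE => /andP [ax /set0Pn [u]].
    rewrite !in_setI => /andP[/andP[zu xu] uU].
    apply/imsetP; exists u; first by rewrite in_setI zu uU.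
    case/andP: (fP u uU) => af uf.
    apply: (U2uniq uU) => //; first by rewrite inE in ax.
    by rewrite inE e_sym in xu.
  have XS' := subset_leq_card XS.
  rewrite setCK.
  set W := nbhd e z :&: _.
  have SW : S \subset W.
    by apply/subsetP => u; rewrite !in_setI in_setU => /andP [-> ->]; rewrite orbT.
  have CASE2 : (exists d, e z d /\ d \in V1 e alpha) \/
      (exists c1 c2, [/\ c1 != c2, c1 \in S, c2 \in S & f c1 = f c2]).
    case: (SAT z alpha za nza') => [[w [c1 [c2 [aw _ c12 [zc1 wc1 zc2 wc2]]]]] | [w [c1 [c2 [zw wa c12 [ac1 wc1 ac2 wc2]]]]]].
    + have c1a : c1 != alpha by apply: contraTneq zc1 => ->.
      have c2a : c2 != alpha by apply: contraTneq zc2 => ->.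
      have := cls e_irr NK c1a aw (etrans (e_sym _ _) wc1).
      rewrite inE => /orP [c1V|c1U]; first by left; exists c1.
      have := cls e_irr NK c2a aw (etrans (e_sym _ _) wc2).
      rewrite inE => /orP [c2V|c2U]; first by left; exists c2.
      right; exists c1, c2; split => //; [by rewrite in_setI inE zc1 c1U | by rewrite in_setI inE zc2 c2U |].
      case/andP: (fP c1 c1U) => af1 uf1; case/andP: (fP c2 c2U) => af2 uf2.
      rewrite -(U2uniq c1U aw (etrans (e_sym _ _) wc1) af1 uf1).
      by rewrite -(U2uniq c2U aw (etrans (e_sym _ _) wc2) af2 uf2).
    + by left; exists w; split => //; exact: (twoA e_irr NK wa c12 ac1 wc1 ac2 wc2).
  case: CASE2 => [[d [zd dV]]|[c1 [c2 [c12 c1S c2S fc]]]].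
  + have dS : d \notin S by rewrite in_setI inU2 dV /= andbF.
    have dSW : d |: S \subset W.
      apply/subsetP => u; rewrite in_setU1 => /orP [/eqP ->|uS]; last exact: (subsetP SW).
      by rewrite in_setI in_setU dV inE zd.
    rewrite add1n; apply: (leq_trans _ (subset_leq_card dSW)).
    rewrite cardsU1 dS add1n ltnS; exact: (leq_trans XS' (leq_imset_card _ _)).
  + have neq : #|f @: S| != #|S|.
      apply/negP => /imset_injP inj.
      by move/eqP: c12; apply; apply: inj.
    rewrite add1n; apply: (leq_trans _ (subset_leq_card SW)).
    apply: (leq_ltn_trans XS'); by rewrite ltn_neqAle neq leq_imset_card.
Qed.
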